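(* Let $k$ be a field of characteristic $\neq 2$, $\mathcal A=k[t,t^{-1},(1-t)^{-1}]$, $t'=1-t^{-1}$, $t''=(1-t)^{-1}$, $\mathfrak g=\mathfrak{sl}_2(k)\otimes_k\mathcal A$, and let $\tau_1,\tau_2$ and $u_0,u_1,u_2$ be as in the context. Define $\mathfrak t=\{g\in\mathfrak g:\tau_1(g)=g,\ \tau_2(g)=g\}$, $\mathfrak g_0=\{g:\tau_1(g)=g,\ \tau_2(g)=-g\}$, $\mathfrak g_1=\{g:\tau_1(g)=-g,\ \tau_2(g)=g\}$, $\mathfrak g_2=\{g:\tau_1(g)=-g,\ \tau_2(g)=-g\}$. Then $\mathfrak t=0$, $\mathfrak g_0=u_0\mathcal A$, $\mathfrak g_1=u_1\mathcal A$ and $\mathfrak g_2=u_2\mathcal A$.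
   Context: Let $x=\begin{pmatrix}-1&2\\0&1\end{pmatrix}$, $y=\begin{pmatrix}-1&0\\-2&1\end{pmatrix}$, $z=\begin{pmatrix}1&0\\0&-1\end{pmatrix}$. $\tau_1$ is the $\mathcal A$-linear map of $\mathfrak g$ with $\tau_1(x\otimes 1)=-x\otimes 1$, $\tau_1(y\otimes 1)=-(z\otimes t'+x\otimes(t'-1))$, $\tau_1(z\otimes 1)=x\otimes t''+y\otimes(t''-1)$; $\tau_2$ is the $\mathcal A$-linear map with $\tau_2(x\otimes 1)=y\otimes t+z\otimes(t-1)$, $\tau_2(y\otimes 1)=-y\otimes 1$, $\tau_2(z\otimes 1)=-(x\otimes t''+y\otimes(t''-1))$. (These are commuting Lie algebra automorphisms of order $2$, corresponding to the permutations $(12)(30)$ and $(23)(10)$ of the $S_4$-action on the Tetrahedron algebra transported to $\mathfrak g$.) Also $u_0=\tfrac14(z\otimes 1+x\otimes t''+y\otimes(t''-1))$, $u_1=\tfrac14(x\otimes 1+y\otimes t+z\otimes(t-1))$, $u_2=\tfrac14(y\otimes 1+z\otimes t'+x\otimes(t'-1))$. *)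

(* Defs.v *)
From HB Require Import structures.
From mathcomp Require Import all_boot all_order all_algebra.
Set Implicit Arguments. Unset Strict Implicit. Unset Printing Implicit Defensive.
Import Order.TTheory GRing.Theory Num.Theory.
Local Open Scope ring_scope.

Section Tetra.
Variable k : fieldType.

(* ambient field of rational functions k(t); A is realized inside it *)
Definition Kt := {fraction {poly k}}.
Definition polyF (p : {poly k}) : Kt := FracField.tofrac p.
Definition tt : Kt := polyF 'X.

(* A = k[t, t^-1, (1-t)^-1] as a subset of k(t) *)
Definition inA (f : Kt) : Prop :=
  exists (p : {poly k}) (a b : nat), f = polyF p / (tt ^+ a * (1 - tt) ^+ b).

Definition t' : Kt := 1 - tt^-1.
Definition t'' : Kt := (1 - tt)^-1.

Definition mx2 (a b c d : Kt) : 'M[Kt]_2 :=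
  \matrix_(i < 2, j < 2)
    if (i == 0%N :> nat) then (if (j == 0%N :> nat) then a else b)
    else (if (j == 0%N :> nat) then c else d).

Definition xm : 'M[Kt]_2 := mx2 (-1) 2 0 1.
Definition ym : 'M[Kt]_2 := mx2 (-1) 0 (-2) 1.
Definition zm : 'M[Kt]_2 := mx2 1 0 0 (-1).

(* g = sl_2(k) (x) A, realized as traceless 2x2 matrices with entries in A *)
Definition in_g (g : 'M[Kt]_2) : Prop := (forall i j, inA (g i j)) /\ \tr g = 0.

(* coordinates of a traceless matrix in the basis x, y, z:
   a x + b y + c z = [[-a-b+c, 2a], [-2b, a+b-c]] *)
Definition coa (g : 'M[Kt]_2) : Kt := g 0 1 / 2.
Definition cob (g : 'M[Kt]_2) : Kt := - (g 1 0) / 2.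
Definition coc (g : 'M[Kt]_2) : Kt := g 0 0 + coa g + cob g.

(* the A-linear maps determined by their values on x(x)1, y(x)1, z(x)1 *)
Definition tau1 (g : 'M[Kt]_2) : 'M[Kt]_2 :=
  coa g *: (- xm)
  + cob g *: (- (t' *: zm + (t' - 1) *: xm))
  + coc g *: (t'' *: xm + (t'' - 1) *: ym).

Definition tau2 (g : 'M[Kt]_2) : 'M[Kt]_2 :=
  coa g *: (tt *: ym + (tt - 1) *: zm)
  + cob g *: (- ym)
  + coc g *: (- (t'' *: xm + (t'' - 1) *: ym)).

Definition u0 : 'M[Kt]_2 := 4^-1 *: (zm + t'' *: xm + (t'' - 1) *: ym).
Definition u1 : 'M[Kt]_2 := 4^-1 *: (xm + tt *: ym + (tt - 1) *: zm).
Definition u2 : 'M[Kt]_2 := 4^-1 *: (ym + t' *: zm + (t' - 1) *: xm).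

End Tetra.

(* Main.v *)
Require Import Defs.
From HB Require Import structures.
From mathcomp Require Import all_boot all_order all_algebra.
From mathcomp Require Import ring.
Import GRing.Theory.
Local Open Scope ring_scope.
Set Implicit Arguments. Unset Strict Implicit.

Section G.
Variable F : fieldType.
Variable t : F.
Definition mx2G (a b c d : F) : 'M[F]_2 :=
  \matrix_(i < 2, j < 2)
    if (i == 0%N :> nat) then (if (j == 0%N :> nat) then a else b)
    else (if (j == 0%N :> nat) then c else d).
Definition xG : 'M[F]_2 := mx2G (-1) 2 0 1.
Definition yG : 'M[F]_2 := mx2G (-1) 0 (-2) 1.
Definition zG : 'M[F]_2 := mx2G 1 0 0 (-1).
Definition tpG : F := 1 - t^-1.
Definition tppG : F := (1 - t)^-1.
Definition coaG (g : 'M[F]_2) : F := g 0 1 / 2.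
Definition cobG (g : 'M[F]_2) : F := - (g 1 0) / 2.
Definition cocG (g : 'M[F]_2) : F := g 0 0 + coaG g + cobG g.
Definition tau1G (g : 'M[F]_2) : 'M[F]_2 :=
  coaG g *: (- xG)
  + cobG g *: (- (tpG *: zG + (tpG - 1) *: xG))
  + cocG g *: (tppG *: xG + (tppG - 1) *: yG).
Definition tau2G (g : 'M[F]_2) : 'M[F]_2 :=
  coaG g *: (t *: yG + (t - 1) *: zG)
  + cobG g *: (- yG)
  + cocG g *: (- (tppG *: xG + (tppG - 1) *: yG)).
Definition u0G : 'M[F]_2 := 4^-1 *: (zG + tppG *: xG + (tppG - 1) *: yG).
Definition u1G : 'M[F]_2 := 4^-1 *: (xG + t *: yG + (t - 1) *: zG).
Definition u2G : 'M[F]_2 := 4^-1 *: (yG + tpG *: zG + (tpG - 1) *: xG).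

Definition M (a b c : F) := mx2G (-a-b+c) (2*a) (-(2*b)) (a+b-c).

Hypothesis h2 : (2 : F) != 0.
Hypothesis ht : t != 0.
Hypothesis h1 : 1 - t != 0.
Lemma h4 : (4 : F) != 0.
Proof. have -> : (4 : F) = 2 * 2 by ring. by rewrite mulf_neq0. Qed.

Lemma matrix2P (A B : 'M[F]_2) : A 0 0 = B 0 0 -> A 0 1 = B 0 1 -> A 1 0 = B 1 0 -> A 1 1 = B 1 1 -> A = B.
Proof.
move=> e00 e01 e10 e11; apply/matrixP => i j.
have o2 : forall k : 'I_2, k = 0 \/ k = 1.
  by case=> [[|[|m]] Hm]; [left|right|by []]; apply/val_inj.
by case: (o2 i) => ->; case: (o2 j) => ->.
Qed.

Lemma trace2 (g : 'M[F]_2) : \tr g = g 0 0 + g 1 1.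
Proof.
rewrite /mxtrace !big_ord_recl big_ord0 addr0.
have -> : lift ord0 (ord0 : 'I_1) = 1 :> 'I_2 by apply/val_inj.
by [].
Qed.

Lemma coaM a b c : coaG (M a b c) = a.
Proof. rewrite /coaG /M mxE /=. field. exact h2. Qed.
Lemma cobM a b c : cobG (M a b c) = b.
Proof. rewrite /cobG /M mxE /=. field. exact h2. Qed.
Lemma cocM a b c : cocG (M a b c) = c.
Proof. rewrite /cocG coaM cobM /M mxE /=. ring. Qed.

Lemma Minj a b c a' b' c' : M a b c = M a' b' c' -> [/\ a = a', b = b' & c = c'].
Proof.
move=> e; split.
- by rewrite -(coaM a b c) -(coaM a' b' c') e.
- by rewrite -(cobM a b c) -(cobM a' b' c') e.
- by rewrite -(cocM a b c) -(cocM a' b' c') e.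
Qed.

Lemma trM a b c : \tr (M a b c) = 0.
Proof. rewrite trace2 /M !mxE /=. ring. Qed.

Lemma Mcoord g : \tr g = 0 -> g = M (coaG g) (cobG g) (cocG g).
Proof.
rewrite trace2 => htr.
apply: matrix2P; rewrite /M /cocG /coaG /cobG !mxE /=.
- ring.
- field. exact h2.
- field. exact h2.
- have -> : g 1 1 = - g 0 0 by apply/eqP; rewrite -addr_eq0 addrC htr.
  ring.
Qed.

Lemma M0 : M 0 0 0 = 0.
Proof. apply: matrix2P; rewrite /M !mxE /=; ring. Qed.
Lemma MN a b c : - M a b c = M (-a) (-b) (-c).
Proof. apply: matrix2P; rewrite /M !mxE /=; ring. Qed.
Lemma MZ s a b c : s *: M a b c = M (s*a) (s*b) (s*c).
Proof. apply: matrix2P; rewrite /M !mxE /=; ring. Qed.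

Lemma tau1M a b c : tau1G (M a b c) =
  M (- a - (tpG - 1) * b + tppG * c) ((tppG - 1) * c) (- tpG * b).
Proof.
rewrite /tau1G coaM cobM cocM.
apply: matrix2P; rewrite /M /xG /yG /zG /mx2G !mxE /=; ring.
Qed.
Lemma tau2M a b c : tau2G (M a b c) =
  M (- tppG * c) (t * a - b - (tppG - 1) * c) ((t - 1) * a).
Proof.
rewrite /tau2G coaM cobM cocM.
apply: matrix2P; rewrite /M /xG /yG /zG /mx2G !mxE /=; ring.
Qed.
Lemma u0M : u0G = M (tppG / 4) ((tppG - 1) / 4) (1 / 4).
Proof. apply: matrix2P; rewrite /u0G /M /xG /yG /zG /mx2G !mxE /=; ring. Qed.
Lemma u1M : u1G = M (1 / 4) (t / 4) ((t - 1) / 4).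
Proof. apply: matrix2P; rewrite /u1G /M /xG /yG /zG /mx2G !mxE /=; ring. Qed.
Lemma u2M : u2G = M ((tpG - 1) / 4) (1 / 4) (tpG / 4).
Proof. apply: matrix2P; rewrite /u2G /M /xG /yG /zG /mx2G !mxE /=; ring. Qed.


Ltac sidec := rewrite ?h1 ?ht ?h2 ?h4 //.

Lemma part1 g : \tr g = 0 -> tau1G g = g -> tau2G g = g -> g = 0.
Proof.
move=> /Mcoord ->; move: (coaG g) (cobG g) (cocG g) => a b c.
rewrite tau1M tau2M => /Minj [E1 E2 E3] /Minj [F1 F2 F3].
subst a b.
have c0 : c = 0.
  have : c * (4 * tppG) = 0.
    move/eqP: E1; rewrite -subr_eq0 => /eqP E1.
    rewrite -E1 /tpG /tppG; field; sidec.
  move/eqP; rewrite !mulf_eq0 (negbTE h4) invr_eq0 (negbTE h1) /= orbF.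
  by move/eqP.
by subst c; rewrite !mulr0 ?oppr0 M0.
Qed.

Lemma part2 g : \tr g = 0 -> tau1G g = g -> tau2G g = - g -> g = (4 * cocG g) *: u0G.
Proof.
move=> /Mcoord ->; rewrite cocM; move: (coaG g) (cobG g) (cocG g) => a b c.
rewrite tau1M tau2M MN => /Minj [E1 E2 E3] /Minj [F1 F2 F3].
rewrite u0M MZ; congr (M _ _ _).
- rewrite -[a]opprK -F1; field; sidec.
- rewrite -E2; field; sidec.
- field; sidec.
Qed.

Lemma part3 g : \tr g = 0 -> tau1G g = - g -> tau2G g = g -> g = (4 * coaG g) *: u1G.
Proof.
move=> /Mcoord ->; rewrite coaM; move: (coaG g) (cobG g) (cocG g) => a b c.
rewrite tau1M tau2M MN => /Minj [E1 E2 E3] /Minj [F1 F2 F3].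
have eb : b = - ((tppG - 1) * c) by rewrite E2 opprK.
rewrite u1M MZ; congr (M _ _ _).
- field; sidec.
- rewrite eb -F3 /tppG; field; sidec.
- rewrite -F3; field; sidec.
Qed.

Lemma part4 g : \tr g = 0 -> tau1G g = - g -> tau2G g = - g -> g = (4 * cobG g) *: u2G.
Proof.
move=> /Mcoord ->; rewrite cobM; move: (coaG g) (cobG g) (cocG g) => a b c.
rewrite tau1M tau2M !MN => /Minj [E1 E2 E3] /Minj [F1 F2 F3].
have ea : a = tppG * c by rewrite -[a]opprK -F1; ring.
have ec : c = tpG * b by rewrite -[c]opprK -E3; ring.
rewrite u2M MZ; congr (M _ _ _).
- rewrite ea ec /tpG /tppG; field; sidec.
- field; sidec.
- rewrite ec; field; sidec.
Qed.

Lemma conv1 : tau1G 0 = 0 /\ tau2G 0 = 0.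
Proof. by rewrite -M0 tau1M tau2M; split; congr (M _ _ _); ring. Qed.

Lemma conv2 s : tau1G (s *: u0G) = s *: u0G /\ tau2G (s *: u0G) = - (s *: u0G).
Proof.
rewrite u0M MZ tau1M tau2M MN; split; congr (M _ _ _); rewrite /tpG /tppG; field; sidec.
Qed.
Lemma conv3 s : tau1G (s *: u1G) = - (s *: u1G) /\ tau2G (s *: u1G) = s *: u1G.
Proof.
rewrite u1M MZ tau1M tau2M MN; split; congr (M _ _ _); rewrite /tpG /tppG; field; sidec.
Qed.
Lemma conv4 s : tau1G (s *: u2G) = - (s *: u2G) /\ tau2G (s *: u2G) = - (s *: u2G).
Proof.
rewrite u2M MZ tau1M tau2M MN; split; congr (M _ _ _); rewrite /tpG /tppG; field; sidec.
Qed.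

End G.

Lemma fracD (F : fieldType) (T S x1 x2 : F) a1 b1 a2 b2 : T != 0 -> S != 0 ->
  x1 / (T ^+ a1 * S ^+ b1) + x2 / (T ^+ a2 * S ^+ b2) =
  (x1 * T ^+ a2 * S ^+ b2 + x2 * T ^+ a1 * S ^+ b1) / (T ^+ (a1 + a2) * S ^+ (b1 + b2)).
Proof.
move=> hT hS; rewrite !exprD.
have h1 := expf_neq0 a1 hT; have h2 := expf_neq0 a2 hT.
have h3 := expf_neq0 b1 hS; have h4 := expf_neq0 b2 hS.
move: (T ^+ a1) (T ^+ a2) (S ^+ b1) (S ^+ b2) h1 h2 h3 h4 => A1 A2 B1 B2 h1 h2 h3 h4.
field. by rewrite h1 h2 h3 h4.
Qed.

Lemma fracM (F : fieldType) (T S x1 x2 : F) a1 b1 a2 b2 : T != 0 -> S != 0 ->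
  x1 / (T ^+ a1 * S ^+ b1) * (x2 / (T ^+ a2 * S ^+ b2)) =
  (x1 * x2) / (T ^+ (a1 + a2) * S ^+ (b1 + b2)).
Proof.
move=> hT hS; rewrite !exprD.
have h1 := expf_neq0 a1 hT; have h2 := expf_neq0 a2 hT.
have h3 := expf_neq0 b1 hS; have h4 := expf_neq0 b2 hS.
move: (T ^+ a1) (T ^+ a2) (S ^+ b1) (S ^+ b2) h1 h2 h3 h4 => A1 A2 B1 B2 h1 h2 h3 h4.
field. by rewrite h1 h2 h3 h4.
Qed.

Section K.
Variable k : fieldType.
Hypothesis hchar : (2%:R : k) != 0.

Lemma tt_neq0 : tt k != 0.
Proof. by rewrite /tt /polyF tofrac_eq0 polyX_eq0. Qed.
Lemma omt_neq0 : 1 - tt k != 0.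
Proof.
have -> : 1 - tt k = polyF (1 - 'X) by rewrite /polyF rmorphB rmorph1.
rewrite /polyF tofrac_eq0 -oppr_eq0 opprB.
by have := monicXsubC (1:k); rewrite polyC1 => /monic_neq0.
Qed.
Lemma polyF_nat n : polyF ((n%:R : k)%:P) = n%:R.
Proof. by rewrite /polyF !rmorph_nat. Qed.
Lemma nat_neq0 n : (n%:R : k) != 0 -> (n%:R : Kt k) != 0.
Proof. by move=> h; rewrite -polyF_nat /polyF tofrac_eq0 polyC_eq0. Qed.
Lemma two_neq0 : (2 : Kt k) != 0.
Proof. exact: nat_neq0. Qed.

Lemma inA_poly (p : {poly k}) : inA (polyF p).
Proof. by exists p, 0%N, 0%N; rewrite !expr0 mulr1 divr1. Qed.
Lemma inA_add (f g : Kt k) : inA f -> inA g -> inA (f + g).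
Proof.
move=> [p1 [a1 [b1 ->]]] [p2 [a2 [b2 ->]]].
exists (p1 * 'X^a2 * (1 - 'X) ^+ b2 + p2 * 'X^a1 * (1 - 'X) ^+ b1), (a1 + a2)%N, (b1 + b2)%N.
have E := @fracD (Kt k) (tt k) (1 - tt k) (polyF p1) (polyF p2) a1 b1 a2 b2 tt_neq0 omt_neq0.
rewrite E.
have -> : polyF (p1 * 'X^a2 * (1 - 'X) ^+ b2 + p2 * 'X^a1 * (1 - 'X) ^+ b1) =
  polyF p1 * tt k ^+ a2 * (1 - tt k) ^+ b2 + polyF p2 * tt k ^+ a1 * (1 - tt k) ^+ b1.
  by rewrite /tt /polyF !(tofracB, tofracD, tofracM, tofracXn, tofrac1).
by [].
Qed.
Lemma inA_mul (f g : Kt k) : inA f -> inA g -> inA (f * g).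
Proof.
move=> [p1 [a1 [b1 ->]]] [p2 [a2 [b2 ->]]].
exists (p1 * p2), (a1 + a2)%N, (b1 + b2)%N.
have E := @fracM (Kt k) (tt k) (1 - tt k) (polyF p1) (polyF p2) a1 b1 a2 b2 tt_neq0 omt_neq0.
rewrite E.
by rewrite /polyF tofracM.
Qed.
Lemma inA_opp (f : Kt k) : inA f -> inA (- f).
Proof. by move=> [p [a [b ->]]]; exists (- p), a, b; rewrite /polyF rmorphN mulNr. Qed.
Lemma inA_sub (f g : Kt k) : inA f -> inA g -> inA (f - g).
Proof. by move=> hf hg; apply: inA_add => //; apply: inA_opp. Qed.
Lemma inA_nat n : inA (n%:R : Kt k).
Proof. rewrite -polyF_nat; exact: inA_poly. Qed.
Lemma inA_one : inA (1 : Kt k).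
Proof. have := inA_nat 1; by rewrite mulr1n. Qed.
Lemma inA_zero : inA (0 : Kt k).
Proof. have := inA_nat 0; by rewrite mulr0n. Qed.
Lemma inA_t : inA (tt k).
Proof. exact: inA_poly. Qed.
Lemma inA_tinv : inA (tt k)^-1.
Proof. by exists 1, 1%N, 0%N; rewrite /polyF rmorph1 expr1 expr0 mulr1 div1r. Qed.
Lemma inA_Sinv : inA (1 - tt k)^-1.
Proof. by exists 1, 0%N, 1%N; rewrite /polyF rmorph1 expr1 expr0 mul1r div1r. Qed.
Lemma inA_invn n : (n%:R : k) != 0 -> inA (n%:R : Kt k)^-1.
Proof.
move=> hn; have hn' := nat_neq0 hn.
have -> : (n%:R : Kt k)^-1 = polyF ((n%:R : k)^-1)%:P.
  apply: (mulfI hn'); rewrite mulfV // -polyF_nat /polyF -tofracM -polyCM.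
  by rewrite mulfV // polyC1 tofrac1.
exact: inA_poly.
Qed.
Lemma four_neq0 : (4%:R : k) != 0.
Proof. have -> : (4%:R : k) = 2%:R * 2%:R by rewrite -natrM. by rewrite mulf_neq0. Qed.

Lemma inA_inv2 : inA (2 : Kt k)^-1. Proof. exact: inA_invn. Qed.
Lemma inA_inv4 : inA (4 : Kt k)^-1. Proof. exact: (inA_invn four_neq0). Qed.

Ltac solveA :=
  repeat match goal with
  | H : inA ?x |- inA ?x => exact H
  | |- inA (_ + - _) => apply: inA_sub
  | |- inA (_ + _) => apply: inA_add
  | |- inA (_ * _) => apply: inA_mul
  | |- inA (- _) => apply: inA_opp
  | |- inA (GRing.inv _) => first [apply: inA_inv2 | apply: inA_inv4 | apply: inA_tinv | apply: inA_Sinv]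
  | |- inA (GRing.natmul _ _) => apply: inA_nat
  | |- inA 1 => apply: inA_one
  | |- inA 0 => apply: inA_zero
  | |- inA (tt _) => apply: inA_t
  end.

Lemma inA_M4 (a b c : Kt k) : inA a -> inA b -> inA c -> inA (M a b c 0 0) /\ inA (M a b c 0 1) /\ inA (M a b c 1 0) /\ inA (M a b c 1 1).
Proof.
move=> ha hb hc.
rewrite /M /mx2G !mxE /=.
split; [solveA|split; [solveA|split;[solveA|solveA]]].
Qed.

Lemma inA_M (a b c : Kt k) : inA a -> inA b -> inA c -> forall i j, inA (M a b c i j).
Proof.
move=> ha hb hc i j.
have o2 : forall m : 'I_2, m = 0 \/ m = 1.
  by case=> [[|[|m]] Hm]; [left|right|by []]; apply/val_inj.
have [h00 [h01 [h10 h11]]] := inA_M4 ha hb hc.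
by case: (o2 i) => ->; case: (o2 j) => ->.
Qed.

Lemma tau1E (g : 'M[Kt k]_2) : tau1 g = tau1G (tt k) g. Proof. by []. Qed.
Lemma tau2E (g : 'M[Kt k]_2) : tau2 g = tau2G (tt k) g. Proof. by []. Qed.
Lemma u0E : u0 k = u0G (tt k). Proof. by []. Qed.
Lemma u1E : u1 k = u1G (tt k). Proof. by []. Qed.
Lemma u2E : u2 k = u2G (tt k). Proof. by []. Qed.

Lemma inA_tp : inA (tpG (tt k)). Proof. rewrite /tpG; solveA. Qed.
Lemma inA_tpp : inA (tppG (tt k)). Proof. rewrite /tppG; solveA. Qed.

End K.

Ltac solveA :=
  repeat match goal with
  | H : inA ?x |- inA ?x => exact H
  | |- inA (_ + - _) => apply: inA_sub
  | |- inA (_ + _) => apply: inA_add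
  | |- inA (_ * _) => apply: inA_mul
  | |- inA (- _) => apply: inA_opp
  | |- inA (GRing.inv _) => first [apply: inA_inv2 | apply: inA_inv4 | apply: inA_tinv | apply: inA_Sinv]
  | |- inA (GRing.natmul _ _) => apply: inA_nat
  | |- inA 1 => apply: inA_one
  | |- inA 0 => apply: inA_zero
  | |- inA (tt _) => apply: inA_t
  end.


Theorem theorem2p1 (k : fieldType) (hchar : (2%:R : k) != 0) :
  (forall g : 'M[Kt k]_2,
      in_g g /\ tau1 g = g /\ tau2 g = g <-> g = 0) /\
  (forall g : 'M[Kt k]_2,
      in_g g /\ tau1 g = g /\ tau2 g = - g <->
      exists a : Kt k, inA a /\ g = a *: u0 k) /\
  (forall g : 'M[Kt k]_2,
      in_g g /\ tau1 g = - g /\ tau2 g = g <->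
      exists a : Kt k, inA a /\ g = a *: u1 k) /\
  (forall g : 'M[Kt k]_2,
      in_g g /\ tau1 g = - g /\ tau2 g = - g <->
      exists a : Kt k, inA a /\ g = a *: u2 k).
Proof.
have h2 := two_neq0 hchar; have ht := tt_neq0 k; have h1 := omt_neq0 k.
have hA2 := inA_inv2 hchar; have hA4 := inA_inv4 hchar.
have hp := inA_tp k; have hpp := inA_tpp k; have htA := inA_t k.
split; [|split; [|split]] => g; split.
- move=> [[_ htr] [e1 e2]]; rewrite tau1E tau2E in e1 e2.
  exact: (@part1 (Kt k) (tt k) h2 ht h1 g htr e1 e2).
- move=> ->; split; [split|].
  + by move=> i j; rewrite mxE; apply: inA_zero.
  + by rewrite -(M0 (Kt k)) trM.
  + by rewrite tau1E tau2E; exact: (@conv1 (Kt k) (tt k) h2).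
- move=> [[hA htr] [e1 e2]]; rewrite tau1E tau2E in e1 e2.
  exists (4 * cocG g); split; last first.
    by rewrite u0E; exact: (@part2 (Kt k) (tt k) h2 g htr e1 e2).
  rewrite /cocG /coaG /cobG.
  have := hA 0 0; have := hA 0 1; have := hA 1 0 => ? ? ?.
  solveA.
- move=> [s [hs ->]]; split; [split|].
  + rewrite u0E (u0M (tt k)) (MZ s); apply: inA_M; solveA.
  + by rewrite u0E (u0M (tt k)) (MZ s) trM.
  + by rewrite tau1E tau2E u0E; exact: (@conv2 (Kt k) (tt k) h2 ht h1 s).
- move=> [[hA htr] [e1 e2]]; rewrite tau1E tau2E in e1 e2.
  exists (4 * coaG g); split; last first.
    by rewrite u1E; exact: (@part3 (Kt k) (tt k) h2 h1 g htr e1 e2).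
  rewrite /coaG; have := hA 0 1 => ?; solveA.
- move=> [s [hs ->]]; split; [split|].
  + rewrite u1E (u1M (tt k)) (MZ s); apply: inA_M; solveA.
  + by rewrite u1E (u1M (tt k)) (MZ s) trM.
  + by rewrite tau1E tau2E u1E; exact: (@conv3 (Kt k) (tt k) h2 ht h1 s).
- move=> [[hA htr] [e1 e2]]; rewrite tau1E tau2E in e1 e2.
  exists (4 * cobG g); split; last first.
    by rewrite u2E; exact: (@part4 (Kt k) (tt k) h2 ht h1 g htr e1 e2).
  rewrite /cobG; have := hA 1 0 => ?; solveA.
- move=> [s [hs ->]]; split; [split|].
  + rewrite u2E (u2M (tt k)) (MZ s); apply: inA_M; solveA.
  + by rewrite u2E (u2M (tt k)) (MZ s) trM.
  + by rewrite tau1E tau2E u2E; exact: (@conv4 (Kt k) (tt k) h2 ht h1 s).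
Qed.
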